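(* Let $G_n$ be a random $d$-regular multigraph on $n$ vertices (configuration model), with $d$ fixed and independent of $n$. Assume the strong external infection regime $0<\kappa<\frac{1}{4(n-1)^2}$, $a>1-\frac{1}{n^\alpha}>1-\kappa>\frac12$ for some $\alpha>1$, and additionally $\lambda\le\frac{1}{dn^\alpha}$. Let $t^{(n)}_{\mathrm{mix}}(\epsilon)$ be the mixing time of the noisy SIS model run on the realized multigraph. Then for every fixed $\epsilon\in(0,1)$ there is a sequence $\delta_n\to0$ such that for every $\epsilon'>0$ and all $n$ large enough, $$\mathbf{P}\Big(\tfrac{n}{2}\log n\,(1-\delta_n)\le t^{(n)}_{\mathrm{mix}}(\epsilon)\le 2n\log n\,(1+\delta_n)\Big)\ge1-\epsilon',$$ where $\mathbf{P}$ is the law of the random multigraph.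
   Context: Configuration model for a random $d$-regular multigraph ($dn$ even): each of the $n$ vertices receives $d$ half-edges; the $dn$ half-edges are paired uniformly at random, each pair forming an edge; self-loops and multiple edges are allowed. The state space is $\Omega_n=\{0,1\}^{V_n}$. For $\sigma\in\Omega_n$, $x\in V_n$, let $n_{I,\sigma}(x)=\#\{e\in E_n: e=(x,y),\ x\ne y,\ \sigma_y=1\}$ (edges counted with multiplicity, self-loops excluded), and $\Delta^{(n)}_{\max}$ the maximal degree. Fix $a,\lambda,\kappa>0$ (may depend on $n$), put $p(\sigma,x)=a+\lambda\, n_{I,\sigma}(x)$. The noisy SIS model is the discrete-time Markov chain on $\Omega_n$ in which, at each step, a vertex $x$ is chosen uniformly at random and only its state may change: if $\sigma_x=0$ it becomes $1$ with probability $p(\sigma,x)$ and stays $0$ otherwise; if $\sigma_x=1$ it becomes $0$ with probability $\kappa$ and stays $1$ otherwise. It has unique stationary distribution $\mu^n_{a,\lambda,\kappa}$. With $\mu^n_{\eta_0,t}$ the law at time $t$ from $\eta_0$ and $d_{TV}$ total variation distance, $d^{(n)}(t)=\sup_{\eta_0}d_{TV}(\mu^n_{\eta_0,t},\mu^n_{a,\lambda,\kappa})$ and $t^{(n)}_{\mathrm{mix}}(\epsilon)=\inf\{t\ge0:d^{(n)}(t)\le\epsilon\}$. *)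

(* Defs.v *)
From HB Require Import structures.
From mathcomp Require Import all_boot all_order all_algebra.
From mathcomp Require Import all_classical all_reals all_analysis.
Set Implicit Arguments. Unset Strict Implicit. Unset Printing Implicit Defensive.
Import Order.TTheory GRing.Theory Num.Theory.
Local Open Scope ring_scope.

(* Configuration model: vertex set 'I_n; half-edges 'I_(d*n); half-edge h
   belongs to vertex h %/ d (so every vertex gets exactly d half-edges).
   A configuration is a perfect matching of the half-edges, encoded as a
   fixed-point-free involution. *)
Definition config (d n : nat) := {ffun 'I_(d * n) -> 'I_(d * n)}.

Definition is_pairing d n (m : config d n) : bool :=
  [forall h, (m (m h) == h) && (m h != h)].

Definition Pcfg (R : realType) d n (E : pred (config d n)) : R :=
  #|[set m : config d n | is_pairing m && E m]|%:R /
  #|[set m : config d n | is_pairing m]|%:R.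

Definition state n := {ffun 'I_n -> bool}.

(* n_{I,sigma}(x): edges (x,y), y <> x, sigma_y = 1, counted with multiplicity
   (each such edge corresponds to exactly one half-edge at x whose partner
   lies at y). Self-loops are excluded. *)
Definition nI d n (m : config d n) (s : state n) (x : 'I_n) : nat :=
  #|[set h : 'I_(d * n) | (((h : nat) %/ d)%N == x) &&
      [exists y : 'I_n, [&& (((m h : nat) %/ d)%N == y), y != x & s y]]]|.

Definition flip n (x : 'I_n) (s : state n) : state n :=
  [ffun y => if y == x then ~~ s x else s y].

Definition sis_kernel (R : realType) d n (m : config d n) (a lam kap : R)
    (s t : state n) : R :=
  (n%:R)^-1 * \sum_(x : 'I_n)
     (let r := if s x then kap else a + lam * (nI m s x)%:R in
      if t == s then 1 - r else if t == flip x s then r else 0).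

Fixpoint sis_law (R : realType) d n (m : config d n) (a lam kap : R)
    (s0 : state n) (k : nat) : state n -> R :=
  match k with
  | 0 => fun t => (t == s0)%:R
  | k'.+1 => fun t => \sum_(s : state n)
        sis_law m a lam kap s0 k' s * sis_kernel m a lam kap s t
  end.

Definition is_stationary (R : realType) d n (m : config d n) (a lam kap : R)
    (pi : {ffun state n -> R}) : Prop :=
  [/\ forall s, 0 <= pi s, \sum_(s : state n) pi s = 1 &
      forall t, \sum_(s : state n) pi s * sis_kernel m a lam kap s t = pi t].

Definition statdist (R : realType) d n (m : config d n) (a lam kap : R)
    : {ffun state n -> R} :=
  xget [ffun => 0] [set pi | is_stationary m a lam kap pi].

Definition dTV (R : realType) n (mu nu : state n -> R) : R :=
  2^-1 * \sum_(s : state n) `|mu s - nu s|.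

Definition dmax (R : realType) d n (m : config d n) (a lam kap : R) (k : nat) : R :=
  \big[Num.max/0]_(s0 : state n)
     dTV (sis_law m a lam kap s0 k) (statdist m a lam kap).

Definition tmix (R : realType) d n (m : config d n) (a lam kap eps : R) : R :=
  inf [set (k%:R : R) | k in [set k : nat | dmax m a lam kap k <= eps]].

(* Main.v *)
Require Import Defs.
From HB Require Import structures.
From mathcomp Require Import all_boot all_order all_algebra.
From mathcomp Require Import all_classical all_reals all_analysis.
From mathcomp Require Import ring lra.
Import Order.TTheory GRing.Theory Num.Theory.
Set Implicit Arguments. Unset Strict Implicit. Unset Printing Implicit Defensive.
Local Open Scope ring_scope.

Section Gen.
Variables (R : realType) (n : nat) (K : state n -> state n -> R).

Fixpoint law (s0 : state n) (k : nat) : state n -> R :=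
  match k with 0 => fun t => (t == s0)%:R
  | k'.+1 => fun t => \sum_s law s0 k' s * K s t end.

Lemma law_step s0 k (f : state n -> R) :
  \sum_t law s0 k.+1 t * f t = \sum_s law s0 k s * \sum_t K s t * f t.
Proof.
rewrite /=. under eq_bigr do rewrite mulr_suml.
rewrite exchange_big /=. apply: eq_bigr => s _. rewrite mulr_sumr.
by apply: eq_bigr => t _; rewrite mulrA.
Qed.

Lemma law0 s0 (f : state n -> R) : \sum_t law s0 0 t * f t = f s0.
Proof.
rewrite /= (bigD1 s0) //= eqxx mul1r big1 ?addr0 // => t /negbTE ->.
by rewrite mul0r.
Qed.

Lemma stat_step (pi : state n -> R) (f : state n -> R) :
  (forall t, \sum_s pi s * K s t = pi t) ->
  \sum_t pi t * f t = \sum_s pi s * \sum_t K s t * f t.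
Proof.
move=> hpi. under eq_bigr do rewrite -hpi mulr_suml.
rewrite exchange_big /=. apply: eq_bigr => s _. rewrite mulr_sumr.
by apply: eq_bigr => t _; rewrite mulrA.
Qed.

Hypothesis K0 : forall s t, 0 <= K s t.
Hypothesis K1 : forall s, \sum_t K s t = 1.

Lemma law_ge0 s0 k t : 0 <= law s0 k t.
Proof. elim: k t => [|k IH] t /=; first by rewrite ler0n.
by apply: sumr_ge0 => s _; apply: mulr_ge0. Qed.

Lemma law_sum1 s0 k : \sum_t law s0 k t = 1.
Proof.
elim: k => [|k IH].
  by have := law0 s0 (fun _ => 1); under eq_bigr do rewrite mulr1.
have := law_step s0 k (fun _ => 1). under eq_bigr do rewrite mulr1.
move=> ->. rewrite -[RHS]IH. apply: eq_bigr => s _.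
under eq_bigr do rewrite mulr1. by rewrite K1 mulr1.
Qed.

End Gen.

Lemma sis_lawE (R : realType) d n (m : config d n) (a lam kap : R) s0 k :
  sis_law m a lam kap s0 k = law (sis_kernel m a lam kap) s0 k.
Proof. by elim: k => //= k ->. Qed.

Lemma flip_neq n x (s : state n) : flip x s != s.
Proof. apply/eqP => /ffunP /(_ x); rewrite ffunE eqxx; by case: (s x). Qed.

Definition wn n (s : state n) : nat := (\sum_(x : 'I_n) (~~ s x : nat))%N.

Lemma wn_flip n x (s : state n) : wn (flip x s) = if s x then (wn s).+1 else (wn s).-1.
Proof.
rewrite /wn (bigD1 x) //= [in RHS](bigD1 x) //= ffunE eqxx.
rewrite (eq_bigr (fun y => (~~ s y : nat))); last by move=> y /negbTE hy; rewrite ffunE hy.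
by case: (s x).
Qed.

Lemma wn_pos n x (s : state n) : ~~ s x -> (0 < wn s)%N.
Proof. by move=> hx; rewrite /wn (bigD1 x) //= hx. Qed.

Lemma sum_if (R : realType) n (s : state n) (A B : R) :
  \sum_x (if s x then A else B) = n%:R * A + (wn s)%:R * (B - A).
Proof.
rewrite (eq_bigr (fun x => A + (~~ s x : nat)%:R * (B - A))); last first.
  by move=> x _; case: (s x); rewrite /= ?mul0r ?mul1r ?addr0 // addrC subrK.
by rewrite big_split /= sumr_const card_ord -mulr_suml /wn natr_sum mulr_natl.
Qed.

Section Kr.
Variables (R : realType) (n : nat) (r : state n -> 'I_n -> R).
Definition Kr (s t : state n) : R := (n%:R)^-1 * \sum_(x : 'I_n)
  (if t == s then 1 - r s x else if t == flip x s then r s x else 0).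

Lemma Kr_exp s (f : state n -> R) : \sum_t Kr s t * f t =
  (n%:R)^-1 * \sum_x ((1 - r s x) * f s + r s x * f (flip x s)).
Proof.
rewrite /Kr. under eq_bigr do rewrite -mulrA mulr_suml. rewrite -mulr_sumr. congr (_ * _).
rewrite exchange_big /=. apply: eq_bigr => x _.
rewrite (bigD1 s) //= eqxx (bigD1 (flip x s)) /=; last by rewrite flip_neq.
rewrite (negbTE (flip_neq x s)) eqxx big1 ?addr0 // => t /andP [/negbTE -> /negbTE ->].
by rewrite mul0r.
Qed.

Hypothesis r01 : forall s x, 0 <= r s x <= 1.
Hypothesis n0 : (0 < n)%N.

Lemma Kr0 s t : 0 <= Kr s t.
Proof.
rewrite /Kr mulr_ge0 ?invr_ge0 ?ler0n //; apply: sumr_ge0 => x _.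
have /andP [h0 h1] := r01 s x.
by case: ifP => _; [rewrite subr_ge0 | case: ifP].
Qed.

Lemma Kr1 s : \sum_t Kr s t = 1.
Proof.
have := Kr_exp s (fun _ => 1). under eq_bigr do rewrite mulr1. move=> ->.
under eq_bigr do rewrite !mulr1 subrK.
by rewrite sumr_const card_ord -mulr_natl mulr1 mulVf // pnatr_eq0 -lt0n.
Qed.
End Kr.

Lemma sis_kernelE (R : realType) d n (m : config d n) (a lam kap : R) :
  sis_kernel m a lam kap = Kr (fun s x => if s x then kap else a + lam * (nI m s x)%:R).
Proof. by []. Qed.

Lemma bern (R : realType) (u e : R) j : 0 <= u -> 0 <= e ->
  u^+j.+1 + j.+1%:R * u^+j * e <= (u+e)^+j.+1.
Proof.
move=> hu he; elim: j => [|j IH]; first by rewrite !expr1 expr0 mulr1 mul1r.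
rewrite [(u+e)^+j.+2]exprS.
apply: (le_trans _ (ler_wpM2l _ IH)); last by rewrite addr_ge0.
have hP : 0 <= u ^+ j by rewrite exprn_ge0.
have hj : 0 <= j%:R :> R by rewrite ler0n.
rewrite !exprS -!natr1 -!mulrA.
set P := u ^+ j. rewrite -/P in hP.
have : 0 <= (j%:R + 1) * (P * e * e) by rewrite mulr_ge0 ?mulr_ge0 // addr_ge0. nra.
Qed.

Section Drift.
Variables (R : realType) (n : nat) (r : state n -> 'I_n -> R) (kap c : R).
Hypothesis r01 : forall s x, 0 <= r s x <= 1.
Hypothesis n0 : (0 < n)%N.
Hypothesis hr1 : forall (s : state n) x, s x -> r s x <= kap.
Hypothesis hr0 : forall (s : state n) x, ~~ s x -> c <= r s x.
Hypothesis kap0 : 0 <= kap.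

Lemma drift_w s : \sum_t Kr r s t * (wn t)%:R <= (1 - c / n%:R) * (wn s)%:R + kap.
Proof.
rewrite Kr_exp.
set W := (wn s)%:R.
have H x : (1 - r s x) * W + r s x * (wn (flip x s))%:R <= (if s x then W + kap else W - c).
  rewrite wn_flip; case hx: (s x).
    by rewrite -addn1 natrD; have := hr1 hx; rewrite -/W; lra.
  have hp := wn_pos (negbT hx).
  rewrite -subn1 natrB // -/W; have := hr0 (negbT hx); lra.
have hN : 0 < n%:R :> R by rewrite ltr0n.
apply: le_trans (ler_wpM2l _ (ler_sum _ (fun x _ => H x))) _.
  by rewrite invr_ge0 ltW.
rewrite sum_if -/W.
have hW : 0 <= W by rewrite ler0n.
have -> : (n%:R)^-1 * (n%:R * (W + kap) + W * (W - c - (W + kap))) =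
   (1 - c / n%:R) * W + kap - kap * W / n%:R by field; rewrite lt0r_neq0.
have : 0 <= kap * W / n%:R by rewrite !mulr_ge0 // invr_ge0 ltW.
lra.
Qed.

Lemma drift_u s (u : R) : 0 <= u <= 1 ->
  \sum_t Kr r s t * u ^+ (wn t) <= (u + (1 - u) / n%:R) ^+ (wn s).
Proof.
move=> /andP [hu0 hu1]; rewrite Kr_exp.
have hN : 0 < n%:R :> R by rewrite ltr0n.
have H x : (1 - r s x) * u ^+ wn s + r s x * u ^+ wn (flip x s) <=
    (if s x then u ^+ wn s else u ^+ (wn s).-1).
  have /andP [h0 h1] := r01 s x.
  rewrite wn_flip; case hx: (s x).
    rewrite exprS. have hP : 0 <= u ^+ wn s by rewrite exprn_ge0.
    set P := u ^+ wn s.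
    have : 0 <= r s x * P * (1 - u) by rewrite !mulr_ge0 // subr_ge0.
    lra.
  have := wn_pos (negbT hx). case: (wn s) => // j _ /=.
  rewrite exprS. have hP : 0 <= u ^+ j by rewrite exprn_ge0.
  set P := u ^+ j.
  have : 0 <= (1 - r s x) * P * (1 - u) by rewrite !mulr_ge0 // subr_ge0.
  lra.
apply: le_trans (ler_wpM2l _ (ler_sum _ (fun x _ => H x))) _.
  by rewrite invr_ge0 ltW.
rewrite sum_if. case: (wn s) => [|j].
  by rewrite !expr0 mul0r addr0 mulr1 mulVf // lt0r_neq0.
have hb := bern j hu0 (_ : 0 <= (1 - u) / n%:R).
apply: le_trans (hb _); last by rewrite mulr_ge0 ?subr_ge0 // invr_ge0 ltW.
rewrite /= exprS.
have -> : (n%:R)^-1 * (n%:R * (u * u ^+ j) + j.+1%:R * (u ^+ j - u * u ^+ j)) =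
  u * u ^+ j + j.+1%:R * u ^+ j * ((1 - u) / n%:R) by field; rewrite lt0r_neq0.
done.
Qed.
End Drift.

Definition ones n : state n := [ffun => true].

Lemma wn_le n (s : state n) : (wn s <= n)%N.
Proof.
rewrite /wn -[X in (_ <= X)%N]card_ord -sum1_card.
by apply: leq_sum => x _; case: (s x).
Qed.

Lemma wn_ones n : wn (ones n) = 0%N.
Proof. by rewrite /wn big1 // => x _; rewrite ffunE. Qed.

Lemma wn_ge1 n (s : state n) : s != ones n -> (1 <= wn s)%N.
Proof.
move=> hs; have [x hx] : exists x, ~~ s x.
  apply/existsP; apply: contraR hs => /existsPn h; apply/eqP/ffunP => x.
  by rewrite ffunE; have := h x; case: (s x).
exact: wn_pos hx.
Qed.

Section Dist.
Variables (R : realType) (n : nat).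
Implicit Types (mu nu : state n -> R).

Lemma sum_off mu : \sum_t mu t = 1 -> \sum_(t | t != ones n) mu t = 1 - mu (ones n).
Proof. by rewrite (bigD1 (ones n)) //= => h; lra. Qed.

Lemma mass_ones_lb mu : (forall t, 0 <= mu t) -> \sum_t mu t = 1 ->
  1 - mu (ones n) <= \sum_t mu t * (wn t)%:R.
Proof.
move=> h0 h1. rewrite -(sum_off h1).
rewrite [X in _ <= X](bigD1 (ones n)) //= wn_ones mulr0 add0r.
apply: ler_sum => t ht; rewrite -[X in X <= _]mulr1 ler_wpM2l //.
by rewrite ler1n wn_ge1.
Qed.

Lemma mass_ones_ub mu : (forall t, 0 <= mu t) ->
  mu (ones n) <= \sum_t mu t * 0 ^+ (wn t).
Proof.
move=> h0. rewrite (bigD1 (ones n)) //= wn_ones expr0 mulr1 lerDl.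
by apply: sumr_ge0 => t _; rewrite mulr_ge0 // exprn_ge0.
Qed.


Lemma dTV_up mu nu : (forall t, 0 <= mu t) -> \sum_t mu t = 1 ->
  (forall t, 0 <= nu t) -> \sum_t nu t = 1 ->
  dTV mu nu <= (1 - mu (ones n)) + (1 - nu (ones n)).
Proof.
move=> m0 m1 n0 n1; rewrite /dTV (bigD1 (ones n)) //=.
have H : \sum_(t | t != ones n) `|mu t - nu t| <= (1 - mu (ones n)) + (1 - nu (ones n)).
  rewrite -(sum_off m1) -(sum_off n1) -big_split /=.
  apply: ler_sum => t _; apply: (le_trans (ler_normB _ _)).
  by rewrite !ger0_norm.
have Ha : `|mu (ones n) - nu (ones n)| <= (1 - mu (ones n)) + (1 - nu (ones n)).
  have hm : mu (ones n) <= 1.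
    by rewrite -m1 (bigD1 (ones n)) //= lerDl sumr_ge0.
  have hn : nu (ones n) <= 1.
    by rewrite -n1 (bigD1 (ones n)) //= lerDl sumr_ge0.
  rewrite ler_norml; apply/andP; split; have := m0 (ones n); have := n0 (ones n); lra.
lra.
Qed.

Lemma dTV_low mu nu : \sum_t mu t = 1 -> \sum_t nu t = 1 ->
  nu (ones n) - mu (ones n) <= dTV mu nu.
Proof.
move=> m1 n1; rewrite /dTV (bigD1 (ones n)) //=.
have H : nu (ones n) - mu (ones n) <= \sum_(t | t != ones n) `|mu t - nu t|.
  have -> : nu (ones n) - mu (ones n) = \sum_(t | t != ones n) (mu t - nu t).
    by rewrite sumrB (sum_off m1) (sum_off n1); lra.
  apply: ler_sum => t _; exact: ler_norm.
have := ler_norm (nu (ones n) - mu (ones n)). rewrite distrC. lra.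
Qed.
End Dist.

Section Iter.
Variables (R : realType) (n : nat) (r : state n -> 'I_n -> R) (kap c : R).
Hypothesis r01 : forall s x, 0 <= r s x <= 1.
Hypothesis n0 : (0 < n)%N.
Hypothesis hr1 : forall (s : state n) x, s x -> r s x <= kap.
Hypothesis hr0 : forall (s : state n) x, ~~ s x -> c <= r s x.
Hypothesis kap0 : 0 <= kap.
Hypothesis c0 : 0 < c.
Hypothesis c1 : c <= 1.

Let K := Kr r.
Let K0 := Kr0 r01.
Let K1 := Kr1 r n0.

Lemma hN : 0 < n%:R :> R. Proof. by rewrite ltr0n. Qed.
Lemma hN1 : 1 <= n%:R :> R. Proof. by rewrite ler1n. Qed.

Lemma E_bound s0 k : \sum_t law K s0 k t * (wn t)%:R <=
   (1 - c / n%:R) ^+ k * n%:R + n%:R * kap / c.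
Proof.
have hq0 : 0 <= 1 - c / n%:R.
  rewrite subr_ge0 ler_pdivrMr ?hN // mul1r; apply: le_trans c1 hN1.
have hnk : 0 <= n%:R * kap / c by rewrite !mulr_ge0 ?ler0n // invr_ge0 ltW.
elim: k => [|k IH].
  rewrite law0 expr0 mul1r. have := wn_le s0; rewrite -(ler_nat R). lra.
rewrite law_step.
apply: le_trans (_ : \sum_s law K s0 k s * ((1 - c / n%:R) * (wn s)%:R + kap) <= _).
  by apply: ler_sum => s _; rewrite ler_wpM2l ?(law_ge0 K0) // (drift_w n0 hr1 hr0 kap0).
under eq_bigr do rewrite mulrDr.
rewrite big_split /= -mulr_suml (law_sum1 K1) mul1r.
under eq_bigr do rewrite mulrCA. rewrite -mulr_sumr.
have e : (1 - c / n%:R) * ((1 - c / n%:R) ^+ k * n%:R + n%:R * kap / c) + kap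
   = (1 - c / n%:R) ^+ k.+1 * n%:R + n%:R * kap / c.
  rewrite exprS; field. by rewrite !lt0r_neq0 // ?hN.
have := ler_wpM2l hq0 IH. lra.
Qed.

Lemma E_stat (pi : state n -> R) : (forall s, 0 <= pi s) -> \sum_s pi s = 1 ->
  (forall t, \sum_s pi s * K s t = pi t) ->
  \sum_t pi t * (wn t)%:R <= n%:R * kap / c.
Proof.
move=> p0 p1 ps. set E := \sum_t pi t * (wn t)%:R.
have hE : E <= (1 - c / n%:R) * E + kap.
  rewrite {1}/E (stat_step _ ps).
  apply: le_trans (_ : \sum_s pi s * ((1 - c / n%:R) * (wn s)%:R + kap) <= _).
    by apply: ler_sum => s _; rewrite ler_wpM2l // (drift_w n0 hr1 hr0 kap0).
  under eq_bigr do rewrite mulrDr.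
  rewrite big_split /= -mulr_suml.
  under eq_bigr do rewrite mulrCA. rewrite -mulr_sumr -/E.
  by rewrite p1 mul1r.
have hcn : c / n%:R * E <= kap by lra.
rewrite ler_pdivlMr //.
have -> : E * c = n%:R * (c / n%:R * E) by field; rewrite lt0r_neq0 // hN.
by rewrite ler_wpM2l ?ler0n.
Qed.

Definition um (m : nat) : R := 1 - (1 - (n%:R)^-1) ^+ m.

Lemma um01 m : 0 <= um m <= 1.
Proof.
have h0 : 0 <= 1 - (n%:R : R)^-1 by rewrite subr_ge0 invf_le1 ?hN ?hN1.
have h1 : 1 - (n%:R : R)^-1 <= 1 by rewrite lerBlDr lerDl invr_ge0 ler0n.
rewrite /um subr_ge0 exprn_ile1 //= lerBlDr lerDl exprn_ge0 //.
Qed.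

Lemma umS m : um m.+1 = um m + (1 - um m) / n%:R.
Proof. rewrite /um exprS; ring. Qed.

Lemma U_bound s0 k : forall m,
  \sum_t law K s0 k t * um m ^+ wn t <= um (m + k) ^+ wn s0.
Proof.
elim: k => [|k IH] m; first by rewrite law0 addn0.
rewrite law_step.
apply: le_trans (_ : \sum_s law K s0 k s * um m.+1 ^+ wn s <= _).
  apply: ler_sum => s _; rewrite ler_wpM2l ?(law_ge0 K0) // umS.
  exact: (drift_u r01 n0 s (um01 m)).
by rewrite addnS -addSn IH.
Qed.
End Iter.

Lemma reidx (R : realFieldType) (T : finType) (F : T -> R) :
  \sum_x F x = \sum_(i < #|T|) F (enum_val i).
Proof. rewrite (reindex (@enum_val T (mem T))) /=; last first.
  by apply: onW_bij; exists enum_rank; [exact: enum_valK| exact: enum_rankK].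
done. Qed.

Lemma stat_exists (R : realFieldType) (T : finType) (K : T -> T -> R) (x0 : T) :
  (forall s t, 0 <= K s t) -> (forall s, \sum_t K s t = 1) ->
  exists pi : {ffun T -> R}, [/\ forall s, 0 <= pi s, \sum_s pi s = 1 &
      forall t, \sum_s pi s * K s t = pi t].
Proof.
move=> K0 K1.
pose N := #|T|.
pose Km : 'M[R]_N := \matrix_(i, j) K (enum_val i) (enum_val j).
pose A := 1%:M - Km.
pose o : 'cV[R]_N := const_mx 1.
have Ao : A *m o = 0.
  apply/matrixP => i j; rewrite !mxE.
  under eq_bigr do rewrite !mxE mulr1.
  rewrite sumrB -(reidx (fun t => K (enum_val i) t)) K1.
  rewrite (bigD1 i) //= eqxx big1 ?addr0 ?subrr // => k hk.
  by rewrite eq_sym (negbTE hk).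
have N0 : (0 < N)%N by apply/card_gt0P; exists x0.
have o0 : o != 0.
  apply/eqP => /matrixP /(_ (Ordinal N0) 0); rewrite !mxE => /eqP.
  by rewrite oner_eq0.
have dA : \det A == 0.
  apply/negPn/negP => hd.
  have hu : A \in unitmx by rewrite unitmxE unitfE.
  by move: o0; rewrite -(mulKmx hu o) Ao mulmx0 eqxx.
have [v v0 vA] := det0P dA.
have vK : v *m Km = v by apply/eqP; rewrite eq_sym -subr_eq0 -{1}(mulmx1 v) -mulmxBr -/A vA.
pose w i := `|v 0 i|.
have w0 i : 0 <= w i by rewrite normr_ge0.
have [j0 hj0] : exists j, v 0 j != 0.
  apply/existsP; apply: contraR v0 => /existsPn h; apply/eqP/rowP => j.
  by rewrite mxE; apply/eqP; rewrite -(negbK (_ == _)) h.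
pose S := \sum_i w i.
have S0 : 0 < S.
  rewrite /S (bigD1 j0) //=; apply: ltr_wpDr; first by apply: sumr_ge0.
  by rewrite normr_gt0.
have wle j : w j <= \sum_i w i * Km i j.
  have -> : w j = `| \sum_i v 0 i * Km i j|.
    by rewrite /w -{1}vK mxE.
  apply: le_trans (ler_norm_sum _ _ _) _.
  by apply: ler_sum => i _; rewrite normrM [`|Km i j|]ger0_norm // mxE.
have wsum : \sum_j (\sum_i w i * Km i j - w j) = 0.
  rewrite sumrB exchange_big /=.
  under eq_bigr do rewrite -mulr_sumr.
  apply/eqP; rewrite subr_eq0; apply/eqP/eq_bigr => i _.
  have -> : \sum_j Km i j = 1.
    by rewrite -(K1 (enum_val i)) (reidx (fun t => K (enum_val i) t));
       apply: eq_bigr => j _; rewrite mxE.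
  by rewrite mulr1.
have weq j : \sum_i w i * Km i j = w j.
  apply/eqP; rewrite -subr_eq0; apply/eqP.
  by apply: (psumr_eq0P _ wsum) => // k _; rewrite subr_ge0.
exists [ffun t => w (enum_rank t) / S]; split.
- by move=> s; rewrite ffunE divr_ge0 // ltW.
- under eq_bigr do rewrite ffunE.
  rewrite -mulr_suml (reidx (fun t => w (enum_rank t))).
  under eq_bigr do rewrite enum_valK.
  by rewrite mulfV // lt0r_neq0.
- move=> t; rewrite ffunE.
  under eq_bigr do rewrite ffunE mulrAC.
  rewrite -mulr_suml (reidx (fun s => w (enum_rank s) * K s t)).
  congr (_ / _); rewrite -weq; apply: eq_bigr => i _.
  by rewrite enum_valK mxE enum_rankK.
Qed.

Lemma nI_le d n (m : config d n) s x : (0 < d)%N -> (nI m s x <= d)%N.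
Proof.
move=> d0; rewrite /nI. set A := [set h | _].
pose f (h : 'I_(d*n)) : 'I_d := Ordinal (ltn_pmod h d0).
have inj : {in A &, injective f}.
  move=> h1 h2; rewrite !inE => /andP[/eqP e1 _] /andP[/eqP e2 _] /(congr1 val) /= e.
  by apply/val_inj; rewrite /= (divn_eq h1 d) (divn_eq h2 d) e1 e2 e.
rewrite -(card_in_imset inj); apply: leq_trans (max_card _) _; by rewrite card_ord.
Qed.

Lemma pairing_exists d n : ~~ odd (d * n) -> exists m : config d n, is_pairing m.
Proof.
move=> ev.
pose f (h : 'I_(d*n)) : 'I_(d*n) := insubd h (if odd h then h.-1 else h.+1).
have fv h : val (f h) = if odd h then h.-1 else h.+1.
  rewrite val_insubd; case oh: (odd h).
    by rewrite (leq_ltn_trans (leq_pred h)).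
  have hl : (h.+1 <= d * n)%N := ltn_ord h.
  rewrite leq_eqVlt in hl; case/orP: hl => [/eqP e|->] //.
  by exfalso; move: ev; rewrite -e /= oh.
exists [ffun h => f h]; apply/forallP => h; rewrite !ffunE; apply/andP; split.
  apply/eqP/val_inj; rewrite fv fv.
  case: h => [[|k] hk] //=; case ok: (odd k) => /=; rewrite ?ok //=.
apply/eqP => /(congr1 val); rewrite fv.
case: h => [[|k] hk] //=; case ok: (odd k) => /= /eqP; rewrite ?ok //=.
  by rewrite eqn_leq ltnn.
by rewrite eqn_leq ltnn andbF.
Qed.

Lemma Pcfg_all (R : realType) d n (E : pred (config d n)) :
  ~~ odd (d * n) -> (forall m, E m) -> @Pcfg R d n E = 1%R.
Proof.
move=> ev hE; rewrite /Pcfg.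
have -> : [set m | is_pairing m && E m] = [set m | is_pairing m].
  by apply/setP => m; rewrite !inE hE andbT.
apply: GRing.mulfV; rewrite pnatr_eq0 -lt0n card_gt0.
have [m hm] := pairing_exists ev.
by apply/set0Pn; exists m; rewrite inE.
Qed.

Section NumAux.
Variable R : realType.
Implicit Types x y : R.

Lemma expN_le y : -1 < y -> expR (- y) <= (1 + y)^-1.
Proof.
move=> hy; rewrite expRN lef_pV2 ?posrE ?expR_gt0 //; last by lra.
exact: expR_ge1Dx.
Qed.

Lemma pow_exp x k : 0 <= 1 - x -> (1 - x) ^+ k <= expR (- x * k%:R).
Proof.
move=> hx; rewrite expRM_natr; apply: lerXn2r; rewrite ?nnegrE ?(ltW (expR_gt0 _)) //.
by have := expR_ge1Dx (- x); lra.
Qed.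

Lemma ln_le x : 0 < x -> ln x <= x - 1.
Proof. by move=> hx; have := expR_ge1Dx (ln x); rewrite lnK ?posrE //; lra. Qed.

Lemma exp_lnN (N y : R) : 0 < N -> N * expR y = expR (ln N + y).
Proof. by move=> hN; rewrite expRD lnK ?posrE. Qed.
End NumAux.

Definition zeros n : state n := [ffun => false].
Lemma wn_zeros n : wn (zeros n) = n.
Proof.
rewrite /wn (eq_bigr (fun _ => 1%N)) ?sum1_card ?card_ord // => x _.
by rewrite ffunE.
Qed.

Lemma per_n (R : realType) d n (m : config d n) (a lam kap eps : R) :
  (0 < d)%N -> (3 <= n)%N -> 0 < kap -> kap < (4 * (n.-1)%:R ^+ 2)^-1 ->
  1 - kap < a -> 0 <= lam -> a + lam * d%:R <= 1 -> 0 < eps < 1 ->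
  8 / eps + 8 / (1 - eps) <= ln n%:R ->
  n%:R / 2 * ln n%:R <= tmix m a lam kap eps <= 2 * n%:R * ln n%:R.
Proof.
set N := n%:R. set L := ln N.
move=> d0 n3 kap0 kapn ha lam0 hal /andP [e0 e1] hM.
have n0 : (0 < n)%N by apply: leq_trans n3.
have hN3 : 3 <= N by rewrite /N (ler_nat R 3).
have hN0 : 0 < N by lra.
have hN1 : (n.-1)%:R = N - 1 by rewrite -subn1 natrB.
have hL0 : 0 < L.
  have h8 : 0 < 8 / eps + 8 / (1 - eps) by rewrite addr_gt0 // divr_gt0 // subr_gt0.
  lra.
have hLN : L <= N - 1 by apply: ln_le.
have hNL : expR L = N by rewrite /L lnK // posrE.
have t1 : L^-1 <= eps / 8.
  have h0 : 0 <= 8 / (1 - eps) by rewrite divr_ge0 // subr_ge0 ltW.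
  have h : 8 / eps <= L by lra.
  apply: le_trans (_ : L^-1 <= (8 / eps)^-1) _; last by rewrite invf_div.
  by rewrite lef_pV2 ?posrE ?divr_gt0.
have t2 : L^-1 <= (1 - eps) / 8.
  have h0 : 0 <= 8 / eps by rewrite divr_ge0 // ltW.
  have h : 8 / (1 - eps) <= L by lra.
  apply: le_trans (_ : L^-1 <= (8 / (1 - eps))^-1) _; last by rewrite invf_div.
  by rewrite lef_pV2 ?posrE ?divr_gt0 ?subr_gt0.
have tL : L * L^-1 = 1 by rewrite mulfV // lt0r_neq0.
have t0 : 0 < L^-1 by rewrite invr_gt0.
rewrite hN1 in kapn.
have k16 : kap * 16 < 1.
  have h4 : 16 <= 4 * (N - 1) ^+ 2 by rewrite expr2; nra.
  have hX : 0 < 4 * (N - 1) ^+ 2 by lra.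
  have : kap * (4 * (N - 1) ^+ 2) < (4 * (N - 1) ^+ 2)^-1 * (4 * (N - 1) ^+ 2).
    by rewrite ltr_pM2r.
  rewrite mulVf ?lt0r_neq0 //. nra.
have kX : kap * (4 * (N - 1) ^+ 2) < 1.
  have hX : 0 < 4 * (N - 1) ^+ 2 by rewrite expr2; nra.
  have : kap * (4 * (N - 1) ^+ 2) < (4 * (N - 1) ^+ 2)^-1 * (4 * (N - 1) ^+ 2).
    by rewrite ltr_pM2r.
  by rewrite mulVf ?lt0r_neq0.
set c := 1 - kap.
have c0 : 0 < c by rewrite /c; lra.
have c1 : c <= 1 by rewrite /c; lra.
pose r := fun (s : state n) x => if s x then kap else a + lam * (nI m s x)%:R.
have hnI s x : (nI m s x)%:R <= d%:R :> R by rewrite ler_nat nI_le.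
have hlI s x : 0 <= lam * (nI m s x)%:R by rewrite mulr_ge0 ?ler0n.
have hlI2 s x : lam * (nI m s x)%:R <= lam * d%:R by rewrite ler_wpM2l.
have r01 : forall s x, 0 <= r s x <= 1.
  move=> s x; rewrite /r; case: (s x); apply/andP; split; try lra.
  - have := hlI s x; lra.
  - have := hlI2 s x; lra.
have hr1 : forall (s : state n) x, s x -> r s x <= kap by move=> s x; rewrite /r => ->.
have hr0 : forall (s : state n) x, ~~ s x -> c <= r s x.
  by move=> s x /negbTE h; rewrite /r h; have := hlI s x; rewrite /c; lra.
have lawE s0 k : sis_law m a lam kap s0 k = law (Kr r) s0 k by exact: sis_lawE.
have K0 := Kr0 r01.
have K1 := Kr1 r n0.
set pi := statdist m a lam kap.
have st : is_stationary m a lam kap pi.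
  rewrite /pi /statdist; apply: xgetPex.
  have [p [h1 h2 h3]] := stat_exists (ones n) K0 K1.
  by exists p; split.
case: st => p0 p1 ps.
have Epi := E_stat n0 hr1 hr0 (ltW kap0) c0 p0 p1 ps.
have mpi := mass_ones_lb p0 p1.
have hb : N * kap / c <= L^-1.
  have hb1 : N * kap * L <= c.
    have : 0 <= N * kap by rewrite mulr_ge0 // ltW.
    rewrite /c; nra.
  have -> : N * kap / c = (N * kap * L) / c * L^-1.
    by field; rewrite !lt0r_neq0.
  rewrite -[X in _ <= X]mul1r; apply: ler_wpM2r; first exact: ltW.
  by rewrite ler_pdivrMr // mul1r.
have hc34 : 3/4 <= c by rewrite /c; lra.
have [k0 /andP [hk0 hk0']] : exists k0 : nat, k0%:R <= 2 * N * L < k0.+1%:R.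
  by exists (Num.trunc (2 * N * L)); apply: trunc_itv; rewrite !mulr_ge0 // ltW.
have hk0'' : 2 * N * L - 1 < k0%:R by rewrite -natr1 in hk0'; lra.
have dk0 : dmax m a lam kap k0 <= eps.
  rewrite /dmax; apply: bigmax_le; first exact: ltW.
  move=> s0 _; rewrite lawE.
  apply: le_trans (dTV_up (law_ge0 K0 s0 k0) (law_sum1 K1 s0 k0) p0 p1) _.
  have h1 := mass_ones_lb (law_ge0 K0 s0 k0) (law_sum1 K1 s0 k0).
  have h3 := E_bound r01 n0 hr1 hr0 (ltW kap0) c0 c1 s0 k0.
  have h4 : (1 - c / N) ^+ k0 <= expR (- (c / N) * k0%:R).
    apply: pow_exp; rewrite subr_ge0 ler_pdivrMr // mul1r; lra.
  have h5 : expR (- (c / N) * k0%:R) * N <= 2 * L^-1.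
    rewrite mulrC exp_lnN // -/L.
    have hcN : c / N * N = c by field; rewrite lt0r_neq0.
    have hcN1 : c / N <= 1 by rewrite ler_pdivrMr // mul1r; lra.
    have hcN0 : 0 <= c / N by rewrite divr_ge0 // ltW.
    have hy : L + - (c / N) * k0%:R <= - (L / 2 - 1).
      have : c / N * (2 * N * L - 1) <= c / N * k0%:R by rewrite ler_wpM2l // ltW.
      have -> : c / N * (2 * N * L - 1) = 2 * c * L - c / N by field; rewrite lt0r_neq0.
      have : 3 / 4 * L <= c * L by rewrite ler_wpM2r // ltW.
      lra.
    apply: le_trans (_ : expR (- (L / 2 - 1)) <= _); first by rewrite ler_expR.
    apply: le_trans (expN_le _) _; first by lra.
    have -> : 1 + (L / 2 - 1) = (2 * L^-1)^-1 by field; rewrite lt0r_neq0.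
    by rewrite invrK.
  have h6 : 0 <= N by lra.
  have h7 := ler_wpM2r h6 h4.
  lra.
have tup : tmix m a lam kap eps <= 2 * N * L.
  apply: le_trans hk0; rewrite /tmix.
  apply: ge_inf; first by exists 0 => x [k _ <-]; rewrite ler0n.
  by exists k0.
rewrite tup andbT.
have low k : k%:R < N / 2 * L -> eps < dmax m a lam kap k.
  move=> hk.
  apply: lt_le_trans (le_bigmax _ _ (zeros n)).
  rewrite lawE.
  apply: lt_le_trans (dTV_low (law_sum1 K1 (zeros n) k) p1).
  have hU := U_bound r01 n0 (zeros n) k 0.
  have hu0 : um R n 0 = 0 by rewrite /um expr0 subrr.
  rewrite hu0 add0n wn_zeros in hU.
  have hm := mass_ones_ub (law_ge0 K0 (zeros n) k).
  set q := 1 - N^-1.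
  have hq0 : 0 <= q by rewrite /q subr_ge0 invf_le1 // -/N; lra.
  have hqk0 : 0 <= q ^+ k by rewrite exprn_ge0.
  have hqk1 : q ^+ k <= 1 by rewrite exprn_ile1 // /q lerBlDr lerDl invr_ge0 ltW.
  have hum : um R n k ^+ n <= expR (- (q ^+ k) * N).
    by apply: pow_exp; rewrite subr_ge0.
  have hqe : expR (- (N - 1)^-1) <= q.
    apply: le_trans (expN_le _) _.
      have : 0 < (N - 1)^-1 by rewrite invr_gt0; lra.
      lra.
    have -> : (1 + (N - 1)^-1)^-1 = q by rewrite /q; field; apply/andP; split;
      rewrite lt0r_neq0 //; lra.
    done.
  have hqke : expR (- (N - 1)^-1 * k%:R) <= q ^+ k.
    by rewrite expRM_natr; apply: lerXn2r => //; rewrite nnegrE ltW // expR_gt0.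
  have hkN : k%:R * (N - 1)^-1 <= 3 / 4 * L.
    rewrite ler_pdivrMr; last by lra.
    have : N / 2 * L <= 3 / 4 * L * (N - 1).
      have -> : 3 / 4 * L * (N - 1) = (3 / 4 * (N - 1)) * L by ring.
      apply: ler_wpM2r; [exact: ltW | lra].
    lra.
  have hNq : expR (L / 4) <= q ^+ k * N.
    apply: le_trans (_ : expR (L / 4) <= expR (- (N - 1)^-1 * k%:R) * N) _.
      rewrite [_ * N]mulrC exp_lnN // -/L ler_expR.
      have : k%:R * (N - 1)^-1 = - (N - 1)^-1 * k%:R * -1 by ring.
      lra.
    exact: (ler_wpM2r (ltW hN0) hqke).
  have hL4 := expR_ge1Dx (L / 4).
  have hinv : expR (- (q ^+ k * N)) <= 4 * L^-1.
    apply: le_trans (expN_le _) _.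
      have : 0 <= q ^+ k * N by rewrite mulr_ge0 // ltW.
      lra.
    have -> : 4 * L^-1 = (L / 4)^-1 by rewrite invf_div mulrC.
    have hq0' : 0 <= q ^+ k * N by rewrite mulr_ge0 // ltW.
    have hL40 : 0 < L / 4 by rewrite divr_gt0.
    by rewrite lef_pV2 ?posrE; lra.
  have : - q ^+ k * N = - (q ^+ k * N) by rewrite mulNr.
  move=> e; rewrite e in hum.
  lra.
apply: lb_le_inf; first by exists k0%:R; exists k0.
move=> x [k hk <-].
rewrite leNgt; apply/negP => /low.
by rewrite ltNge hk.
Qed.

Local Open Scope classical_set_scope.

Theorem mainTheorem7 (R : realType) (d : nat) (a lam kap : nat -> R) (alpha : R) :
  (0 < d)%N -> 1 < alpha ->
  (forall n : nat, (1 < n)%N ->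
     [/\ 0 < kap n, kap n < (4 * (n.-1)%:R ^+ 2)^-1,
         1 - ((n%:R) `^ alpha)^-1 < a n,
         1 - kap n < 1 - ((n%:R) `^ alpha)^-1 & 2^-1 < 1 - kap n]
     /\ [/\ 0 < lam n, lam n <= (d%:R * (n%:R) `^ alpha)^-1
          & a n + lam n * d%:R <= 1]) ->
  forall eps : R, 0 < eps < 1 ->
  exists delta : nat -> R,
    delta n @[n --> \oo] --> (0 : R^o) /\
    forall eps' : R, 0 < eps' ->
      \forall n \near \oo, ~~ odd (d * n) ->
        1 - eps' <= @Pcfg R d n
          [pred m : config d n |
             (n%:R / 2 * ln n%:R * (1 - delta n) <= tmix m (a n) (lam n) (kap n) eps)
             && (tmix m (a n) (lam n) (kap n) eps <= 2 * n%:R * ln n%:R * (1 + delta n))].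
Proof.
move=> d0 _ H eps heps.
exists (fun _ => 0); split; first (apply: (@cvg_cst R^o)).
move=> eps' heps'.
have /andP [e0 e1] := heps.
set M := 8 / eps + 8 / (1 - eps).
exists (maxn 3 (Num.trunc (expR M)).+1) => // n /=.
rewrite geq_max => /andP [n3 hnM] ev.
have n1 : (1 < n)%N by apply: leq_trans n3.
have [[k0 kn ha1 ha2 _] [l0 _ hal]] := H n n1.
rewrite Pcfg_all //; first by lra.
move=> m; rewrite /= subr0 addr0 !mulr1.
apply: per_n => //; try lra.
have hN : expR M <= n%:R.
  apply: ltW; apply: lt_le_trans (truncnS_gt _) _.
  by rewrite ler_nat.
rewrite -/M; have -> : M = ln (expR M) by rewrite expRK.
by rewrite ler_ln // posrE ?expR_gt0 //; apply: lt_le_trans hN; exact: expR_gt0.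
Qed.
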